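(* For any $n\geq 1$ and any formulas $\psi_1,\dots,\psi_n$, $\mathbf{GLP}\nvdash\bigwedge_{i=1}^n([0]\psi_i\to\psi_i)\to\langle 0\rangle^{n+1}\top$.
   Context: $\mathbf{GLP}$ is the propositional polymodal logic with modalities $[0],[1],\dots$ ($\langle k\rangle:=\neg[k]\neg$) axiomatized by classical tautologies; $[k](\phi\to\psi)\to([k]\phi\to[k]\psi)$; $[k]([k]\phi\to\phi)\to[k]\phi$; $\langle j\rangle\phi\to[k]\langle j\rangle\phi$ for $j<k$; $[j]\phi\to[k]\phi$ for $j\leq k$; rules modus ponens and necessitation. $\langle 0\rangle^{n+1}$ denotes $n+1$ iterations of $\langle 0\rangle$. *)

(* Defs.v *)
From Stdlib Require Import List Arith.

Inductive form : Type :=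
| Var : nat -> form
| Bot : form
| Imp : form -> form -> form
| Box : nat -> form -> form.

Definition Neg (p : form) : form := Imp p Bot.
Definition Top : form := Neg Bot.
Definition Or (p q : form) : form := Imp (Neg p) q.
Definition And (p q : form) : form := Neg (Imp p (Neg q)).
Definition Dia (k : nat) (p : form) : form := Neg (Box k (Neg p)).

Fixpoint Dia_iter (k m : nat) (p : form) : form :=
  match m with
  | 0 => p
  | S m' => Dia k (Dia_iter k m' p)
  end.

Fixpoint subst (s : nat -> form) (p : form) : form :=
  match p with
  | Var i => s i
  | Bot => Bot
  | Imp a b => Imp (subst s a) (subst s b)
  | Box k a => Box k (subst s a)
  end.

Fixpoint peval (v : form -> bool) (p : form) : bool :=
  match p with
  | Var _ => v p
  | Bot => false
  | Imp a b => implb (peval v a) (peval v b)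
  | Box _ _ => v p
  end.

(* A propositional tautology: true under every valuation of the
   propositional atoms (variables and boxed formulas treated as atoms).
   This yields exactly all substitution instances of classical tautologies. *)
Definition tautology (p : form) : Prop := forall v, peval v p = true.

Inductive GLP_prv : form -> Prop :=
| ax_taut p : tautology p -> GLP_prv p
| ax_K k p q : GLP_prv (Imp (Box k (Imp p q)) (Imp (Box k p) (Box k q)))
| ax_Lob k p : GLP_prv (Imp (Box k (Imp (Box k p) p)) (Box k p))
| ax_mono_dia j k p : j < k -> GLP_prv (Imp (Dia j p) (Box k (Dia j p)))
| ax_mono_box j k p : j <= k -> GLP_prv (Imp (Box j p) (Box k p))
| r_mp p q : GLP_prv (Imp p q) -> GLP_prv p -> GLP_prv q
| r_nec k p : GLP_prv p -> GLP_prv (Box k p).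

Definition BigAnd (l : list form) : form := fold_right And Top l.

(* Main.v *)
Require Import Defs.
From Stdlib Require Import List Arith Lia Bool.

Fixpoint ev (p : form) (x : nat) : bool :=
  match p with
  | Var _ => false
  | Bot => false
  | Imp a b => implb (ev a x) (ev b x)
  | Box k a => match k with 0 => forallb (fun y => ev a y) (seq 0 x) | S _ => true end
  end.

Lemma boxE a x : ev (Box 0 a) x = true <-> forall y, y < x -> ev a y = true.
Proof.
  simpl. rewrite forallb_forall. split; intros H y Hy.
  - apply H. apply in_seq. lia.
  - apply in_seq in Hy. apply H. lia.
Qed.

Lemma implb_true a b : implb a b = true <-> (a = true -> b = true).
Proof. destruct a, b; simpl; intuition congruence. Qed.

Lemma peval_ev x p : peval (fun q => ev q x) p = ev p x.
Proof. induction p; simpl; auto. rewrite IHp1, IHp2. auto. Qed.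

Lemma sound p : GLP_prv p -> forall x, ev p x = true.
Proof.
  induction 1; intro x.
  - rewrite <- (peval_ev x). apply H.
  - simpl ev at 1. apply implb_true. intro H1. apply implb_true. intro H2.
    destruct k; [|reflexivity].
    apply boxE. pose proof (proj1 (boxE (Imp p q) x) H1) as H1'. pose proof (proj1 (boxE p x) H2) as H2'. clear H1 H2. rename H1' into H1. rename H2' into H2. intros y Hy.
    specialize (H1 y Hy). specialize (H2 y Hy). simpl in H1. rewrite H2 in H1. exact H1.
  - destruct k; [|reflexivity].
    apply implb_true. intro H1. apply boxE. pose proof (proj1 (boxE (Imp (Box 0 p) p) x) H1) as H1'. clear H1. rename H1' into H1.
    assert (forall y, y < x -> ev p y = true); [|auto].
    intro y. induction y as [y IH] using lt_wf_ind. intro Hy.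
    specialize (H1 y Hy). simpl in H1. apply (proj1 (implb_true _ _) H1).
    apply boxE. intros z Hz. apply IH; lia.
  - destruct k; [lia|]. apply implb_true. intros. reflexivity.
  - destruct k.
    + assert (j = 0) by lia. subst. apply implb_true. auto.
    + apply implb_true. intros. reflexivity.
  - specialize (IHGLP_prv1 x). simpl in IHGLP_prv1. rewrite IHGLP_prv2 in IHGLP_prv1. exact IHGLP_prv1.
  - destruct k; [|reflexivity]. apply boxE. auto.
Qed.

Definition good (f : form) (x : nat) : bool := ev (Imp (Box 0 f) f) x.

Lemma bad_unique f x y : good f x = false -> good f y = false -> x = y.
Proof.
  unfold good. intros Hx Hy. simpl in Hx, Hy.
  destruct (forallb _ (seq 0 x)) eqn:Ex; [|discriminate].
  destruct (forallb _ (seq 0 y)) eqn:Ey; [|discriminate].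
  simpl in Hx, Hy.
  assert (Bx := proj1 (boxE f x) Ex). assert (By := proj1 (boxE f y) Ey).
  destruct (Nat.lt_trichotomy x y) as [H|[H|H]]; auto.
  - rewrite By in Hx; auto. discriminate.
  - rewrite Bx in Hy; auto. discriminate.
Qed.

Fixpoint cnt (p : nat -> bool) (l : list nat) : nat :=
  match l with nil => 0 | a :: l => (if p a then 1 else 0) + cnt p l end.

Lemma cnt_or p q l : cnt (fun x => p x || q x) l <= cnt p l + cnt q l.
Proof. induction l; simpl; auto. destruct (p a), (q a); simpl; lia. Qed.

Lemma cnt_zero p l : (forall x, In x l -> p x = false) -> cnt p l = 0.
Proof. induction l; simpl; intros H; auto. rewrite H; auto. Qed.

Lemma cnt_le1 p l : NoDup l -> (forall x y, p x = true -> p y = true -> x = y) -> cnt p l <= 1.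
Proof.
  induction 1; intros U; simpl; auto.
  destruct (p x) eqn:E.
  - rewrite cnt_zero; auto. intros y Hy. destruct (p y) eqn:E2; auto.
    assert (x = y) by (apply U; auto). subst. contradiction.
  - simpl. auto.
Qed.

Lemma cnt_ext p q l : (forall x, p x = q x) -> cnt p l = cnt q l.
Proof. intros H; induction l; simpl; auto. rewrite H, IHl; auto. Qed.

Lemma cnt_bad (L : list form) l : NoDup l ->
  cnt (fun x => existsb (fun f => negb (good f x)) L) l <= length L.
Proof.
  intros ND. induction L; simpl.
  - rewrite cnt_zero; auto.
  - eapply Nat.le_trans. apply (cnt_or (fun x => negb (good a x))).
    assert (cnt (fun x => negb (good a x)) l <= 1); [|lia].
    apply cnt_le1; auto. intros x y Hx Hy. apply negb_true_iff in Hx, Hy.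
    eapply bad_unique; eauto.
Qed.

Lemma cnt_lt p l : cnt p l < length l -> exists x, In x l /\ p x = false.
Proof.
  induction l; simpl; intros H; [lia|].
  destruct (p a) eqn:E.
  - destruct IHl as [x [Hx Hp]]; [lia|]. eauto.
  - eauto.
Qed.



Lemma dia_iter_le k x : ev (Dia_iter 0 k Top) x = true -> k <= x.
Proof.
  revert x; induction k; intros x H; [lia|].
  simpl Dia_iter in H. unfold Dia, Neg in H. simpl ev in H.
  destruct (forallb _ (seq 0 x)) eqn:E; [discriminate|].
  apply Bool.not_true_iff_false in E.
  destruct (existsb (fun y => ev (Dia_iter 0 k Top) y) (seq 0 x)) eqn:E3.
  - apply existsb_exists in E3. destruct E3 as [y [Hy Ey]].
    apply in_seq in Hy. apply IHk in Ey. lia.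
  - exfalso. apply E. apply forallb_forall. intros y Hy.
    destruct (ev (Dia_iter 0 k Top) y) eqn:Ey; auto.
    assert (existsb (fun y => ev (Dia_iter 0 k Top) y) (seq 0 x) = true).
    { apply existsb_exists. eauto. }
    congruence.
Qed.

Lemma bigand_true L x : (forall f, In f L -> ev f x = true) -> ev (BigAnd L) x = true.
Proof.
  induction L; simpl; intros H; auto.
  rewrite H; auto. rewrite IHL; auto.
Qed.

Theorem mainTheorem13 (n : nat) (psi : nat -> form) :
  1 <= n ->
  ~ GLP_prv
      (Imp (BigAnd (map (fun i => Imp (Box 0 (psi i)) (psi i)) (seq 1 n)))
           (Dia_iter 0 (S n) Top)).
Proof.
  intros _ H.
  set (L := map psi (seq 1 n)).
  assert (C := cnt_bad L (seq 0 (S n)) (seq_NoDup _ _)).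
  assert (length L = n) by (unfold L; rewrite length_map, length_seq; auto).
  destruct (cnt_lt (fun x => existsb (fun f => negb (good f x)) L) (seq 0 (S n))) as [m [Hm Hg]].
  { rewrite length_seq. lia. }
  apply in_seq in Hm.
  assert (E := sound _ H m). simpl ev at 1 in E.
  rewrite bigand_true in E.
  - simpl implb in E. apply (dia_iter_le (S n) m) in E. lia.
  - intros f Hf. apply in_map_iff in Hf. destruct Hf as [i [<- Hi]].
    destruct (good (psi i) m) eqn:G; [exact G|].
    assert (existsb (fun f => negb (good f m)) L = true).
    { apply existsb_exists. exists (psi i). split.
      - unfold L. apply in_map. auto.
      - rewrite G. auto. }
    congruence.
Qed.
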